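(* Let $X_n$ be the number of head abstractions of a uniformly random plain $\lambda$-term of size $n$. Then $X_n$ converges in law to a geometric distribution with parameter $\rho$: for every $h\ge0$, $\mathbb P(X_n=h)\to(1-\rho)\rho^h$ as $n\to\infty$. In particular $\mathbb E X_n\to \rho/(1-\rho)\approx 0.4196$.
   Context: Plain $\lambda$-terms in de Bruijn notation are generated by $T::=\underline{n}\mid \lambda T\mid (T\,T)$, with index $\underline n$ encoded as $\mathsf S^n\mathsf 0$. Size: $|\mathsf 0|=1$, $|\mathsf S\,\underline n|=|\underline n|+1$, $|M\,N|=|M|+|N|+1$, $|\lambda M|=|M|+1$. Every term can be written uniquely as $\lambda^h M$ with $M$ not an abstraction; $h$ is its number of head abstractions. $\rho\approx 0.29559774$ is the positive real root of $z^3+z^2+3z-1$ (the radius of convergence of the generating function of plain terms). *)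

(* Defs.v *)
From Stdlib Require Import Reals Lra Lia Arith List FinFun.
Import ListNotations.

(** Plain lambda-terms in de Bruijn notation: T ::= n | \lambda T | (T T). *)
Inductive term : Type :=
| Var : nat -> term          (* index n, encoded as S^n 0 *)
| Lam : term -> term
| App : term -> term -> term.

Fixpoint size (t : term) : nat :=
  match t with
  | Var n => S n
  | Lam M => S (size M)
  | App M N => S (size M + size N)
  end.

Fixpoint heads (t : term) : nat :=
  match t with
  | Lam M => S (heads M)
  | _ => 0
  end.

Fixpoint enum_le (n : nat) : list term :=
  match n with
  | 0 => []
  | S m =>
      map Var (seq 0 (S m))
      ++ map Lam (enum_le m)
      ++ flat_map (fun M => map (App M) (enum_le m)) (enum_le m)
  end.

Definition terms_of_size (n : nat) : list term :=
  filter (fun t => Nat.eqb (size t) n) (enum_le n).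

Definition nb_terms (n : nat) : nat := length (terms_of_size n).
Definition nb_terms_heads (n h : nat) : nat :=
  length (filter (fun t => Nat.eqb (heads t) h) (terms_of_size n)).

Definition prob_heads (n h : nat) : R :=
  (INR (nb_terms_heads n h) / INR (nb_terms n))%R.

(** E X_n = sum_{h=0}^{n} h P(X_n = h)  (X_n <= n always). *)
Definition exp_heads (n : nat) : R :=
  sum_f_R0 (fun h => (INR h * prob_heads n h)%R) n.

Lemma enum_le_complete : forall n t, size t <= n -> In t (enum_le n).
Proof.
  induction n as [|m IH]; intros t Ht.
  - destruct t; simpl in Ht; lia.
  - change (In t (map Var (seq 0 (S m)) ++ map Lam (enum_le m) ++ flat_map (fun M => map (App M) (enum_le m)) (enum_le m))).
    apply in_or_app. destruct t as [k|M|M N]; simpl in Ht.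
    + left. apply in_map. apply in_seq. lia.
    + right. apply in_or_app. left. apply in_map. apply IH. lia.
    + right. apply in_or_app. right. apply in_flat_map. exists M.
      split; [apply IH; lia|]. apply in_map. apply IH; lia.
Qed.

Lemma NoDup_flat_map_app (l : list term) :
  NoDup l -> NoDup (flat_map (fun M => map (App M) l) l).
Proof.
  intros Hl. assert (H : forall l', NoDup l' ->
    NoDup (flat_map (fun M => map (App M) l) l')).
  { induction l' as [|a l' IH]; intros Hl'; simpl; [constructor|].
    inversion Hl'; subst. apply NoDup_app.
    - apply FinFun.Injective_map_NoDup; [intros x y E; now inversion E|exact Hl].
    - now apply IH.
    - intros x Hx Hx'. apply in_map_iff in Hx as [y [<- _]].
      apply in_flat_map in Hx' as [z [Hz Hz']].
      apply in_map_iff in Hz' as [w [E _]]. inversion E; subst. contradiction. }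
  now apply H.
Qed.

Lemma enum_le_NoDup : forall n, NoDup (enum_le n).
Proof.
  induction n as [|m IH]; [constructor|].
  change (NoDup (map Var (seq 0 (S m)) ++ map Lam (enum_le m) ++ flat_map (fun M => map (App M) (enum_le m)) (enum_le m))).
  apply NoDup_app; [|apply NoDup_app|].
  - apply FinFun.Injective_map_NoDup; [intros x y E; now inversion E|apply seq_NoDup].
  - apply FinFun.Injective_map_NoDup; [intros x y E; now inversion E|exact IH].
  - now apply NoDup_flat_map_app.
  - intros x Hx Hx'. apply in_map_iff in Hx as [y [<- _]].
    apply in_flat_map in Hx' as [z [_ Hz']].
    apply in_map_iff in Hz' as [w [E _]]. discriminate.
  - intros x Hx Hx'. apply in_map_iff in Hx as [y [<- _]].
    apply in_app_or in Hx' as [H|H].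
    + apply in_map_iff in H as [w [E _]]. discriminate.
    + apply in_flat_map in H as [z [_ Hz']].
      apply in_map_iff in Hz' as [w [E _]]. discriminate.
Qed.

Lemma terms_of_size_spec : forall n t, In t (terms_of_size n) <-> size t = n.
Proof.
  intros n t. unfold terms_of_size. rewrite filter_In, Nat.eqb_eq.
  split; [tauto|]. intros H. split; [apply enum_le_complete; lia|exact H].
Qed.

Lemma terms_of_size_NoDup : forall n, NoDup (terms_of_size n).
Proof. intros n. apply NoDup_filter, enum_le_NoDup. Qed.

(* Main.v *)
Require Import Defs.
From Stdlib Require Import Reals Lra Lia Arith List Permutation FinFun.
Import ListNotations.

Notation tos := terms_of_size.

Lemma len_eq {A} (l1 l2 : list A) : NoDup l1 -> NoDup l2 ->
  (forall x, In x l1 <-> In x l2) -> length l1 = length l2.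
Proof. intros H1 H2 H. apply Permutation_length, NoDup_Permutation; auto. Qed.

Lemma NoDup_flat_map_gen {A B} (f : A -> list B) (l : list A) :
  NoDup l -> (forall x, In x l -> NoDup (f x)) ->
  (forall x y z, In x l -> In y l -> In z (f x) -> In z (f y) -> x = y) ->
  NoDup (flat_map f l).
Proof.
  induction l as [|a l IH]; intros Hl Hf Hd; simpl; [constructor|].
  inversion Hl; subst. apply NoDup_app.
  - apply Hf; now left.
  - apply IH; auto. intros x Hx; apply Hf; now right.
    intros x y z Hx Hy; apply Hd; now right.
  - intros z Hz Hz'. apply in_flat_map in Hz' as [y [Hy Hzy]].
    assert (a = y) by (apply (Hd a y z); auto; [now left | now right]).
    subst; contradiction.
Qed.

Lemma list_sum_const {A} (l : list A) c :
  list_sum (map (fun _ => c) l) = length l * c.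
Proof. induction l as [|a l IH]; simpl; [reflexivity|]. rewrite IH; lia. Qed.

Definition apps n := flat_map (fun i => flat_map (fun M => map (App M) (tos (n - i))) (tos i)) (seq 0 (S n)).

Lemma nb_terms_rec n : nb_terms (S n) =
  1 + nb_terms n + list_sum (map (fun i => nb_terms i * nb_terms (n - i)) (seq 0 (S n))).
Proof.
  unfold nb_terms.
  assert (HND : forall k, NoDup (tos k)) by apply terms_of_size_NoDup.
  assert (HIn : forall k t, In t (tos k) <-> size t = k) by apply terms_of_size_spec.
  transitivity (length (Var n :: map Lam (tos n) ++ apps n)).
  - apply len_eq; auto.
    + constructor.
      * intro H. apply in_app_or in H as [H|H].
        -- apply in_map_iff in H as [y [E _]]; discriminate.
        -- unfold apps in H. apply in_flat_map in H as [i [_ H]].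
           apply in_flat_map in H as [y [_ H]]. apply in_map_iff in H as [z [E _]]; discriminate.
      * apply NoDup_app.
        -- apply FinFun.Injective_map_NoDup; [intros x y E; now inversion E|auto].
        -- unfold apps. apply NoDup_flat_map_gen.
           ++ apply seq_NoDup.
           ++ intros i _. apply NoDup_flat_map_gen; auto.
              ** intros M _. apply FinFun.Injective_map_NoDup; [intros x y E; now inversion E|auto].
              ** intros x y z _ _ Hx Hy. apply in_map_iff in Hx as [a [<- _]].
                 apply in_map_iff in Hy as [b [E _]]. now inversion E.
           ++ intros x y z _ _ Hx Hy.
              apply in_flat_map in Hx as [a [Ha Hx]]. apply in_map_iff in Hx as [b [<- _]].
              apply in_flat_map in Hy as [c [Hc Hy]]. apply in_map_iff in Hy as [d [E _]].
              inversion E; subst. apply HIn in Ha. apply HIn in Hc. congruence.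
        -- intros a Ha Hb. apply in_map_iff in Ha as [y [<- _]].
           unfold apps in Hb. apply in_flat_map in Hb as [i [_ H]].
           apply in_flat_map in H as [z [_ H]]. apply in_map_iff in H as [w [E _]]; discriminate.
    + intros x. rewrite HIn. split.
      * intros Hx. destruct x as [k|M|M N]; simpl in Hx.
        -- injection Hx as ->. now left.
        -- right. apply in_or_app. left. apply in_map. apply HIn. lia.
        -- right. apply in_or_app. right. unfold apps. apply in_flat_map.
           exists (size M). split; [apply in_seq; lia|].
           apply in_flat_map. exists M. split; [now apply HIn|].
           apply in_map. apply HIn. lia.
      * intros [<-|H]; [reflexivity|]. apply in_app_or in H as [H|H].
        -- apply in_map_iff in H as [y [<- Hy]]. apply HIn in Hy. simpl; lia.
        -- unfold apps in H. apply in_flat_map in H as [i [Hi H]]. apply in_seq in Hi.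
           apply in_flat_map in H as [M [HM H]]. apply in_map_iff in H as [N [<- HN]].
           apply HIn in HM. apply HIn in HN. simpl. lia.
  - cbn [length]. rewrite length_app, length_map. unfold apps. rewrite length_flat_map.
    assert (E : map (fun x => length (flat_map (fun M => map (App M) (tos (n - x))) (tos x))) (seq 0 (S n)) = map (fun i => length (tos i) * length (tos (n - i))) (seq 0 (S n))).
    { apply map_ext. intros i.
      rewrite length_flat_map.
      rewrite (map_ext _ (fun _ => length (tos (n - i)))) by (intros; apply length_map).
      now rewrite list_sum_const. }
    rewrite E. lia.
Qed.

Lemma nbh_S n h : nb_terms_heads (S n) (S h) = nb_terms_heads n h.
Proof.
  unfold nb_terms_heads.
  assert (HND : forall k, NoDup (tos k)) by apply terms_of_size_NoDup.
  assert (HIn : forall k t, In t (tos k) <-> size t = k) by apply terms_of_size_spec.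
  rewrite <- (length_map Lam (filter _ (tos n))).
  apply len_eq.
  - now apply NoDup_filter.
  - apply FinFun.Injective_map_NoDup; [intros x y E; now inversion E|now apply NoDup_filter].
  - intros x. rewrite filter_In, HIn, Nat.eqb_eq. split.
    + intros [Hs Hh]. destruct x as [k|M|M N]; simpl in Hh; try discriminate.
      apply in_map. apply filter_In. rewrite HIn, Nat.eqb_eq. simpl in Hs. split; lia.
    + intros H. apply in_map_iff in H as [y [<- Hy]]. apply filter_In in Hy.
      rewrite HIn, Nat.eqb_eq in Hy. simpl. split; lia.
Qed.

Lemma nbh_0 n : nb_terms_heads (S n) 0 + nb_terms n = nb_terms (S n).
Proof.
  unfold nb_terms_heads, nb_terms.
  assert (HND : forall k, NoDup (tos k)) by apply terms_of_size_NoDup.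
  assert (HIn : forall k t, In t (tos k) <-> size t = k) by apply terms_of_size_spec.
  rewrite <- (length_map Lam (tos n)), <- length_app.
  apply len_eq; auto.
  - apply NoDup_app.
    + now apply NoDup_filter.
    + apply FinFun.Injective_map_NoDup; [intros x y E; now inversion E|auto].
    + intros a Ha Hb. apply in_map_iff in Hb as [y [<- _]].
      apply filter_In in Ha as [_ Ha]. discriminate.
  - intros x. rewrite in_app_iff, filter_In, HIn, Nat.eqb_eq. split.
    + intros [[Hs _]|H]; auto. apply in_map_iff in H as [y [<- Hy]]. apply HIn in Hy. simpl; lia.
    + intros Hs. destruct x as [k|M|M N]; simpl in Hs.
      * left; auto.
      * right. apply in_map. apply HIn. lia.
      * left; auto.
Qed.

Lemma nb0 : nb_terms 0 = 0. Proof. reflexivity. Qed.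
Lemma nbh0 h : nb_terms_heads 0 h = 0. Proof. reflexivity. Qed.
Lemma nb_vals : nb_terms 1 = 1 /\ nb_terms 2 = 2 /\ nb_terms 3 = 4 /\ nb_terms 4 = 9 /\ nb_terms 5 = 22.
Proof. vm_compute. repeat split. Qed.
Open Scope R_scope.

Definition PR (T : nat -> nat) := forall n : nat,
  (S (S (S (S (S (S n))))) * T (S (S (S (S (S n))))) + (2*n+9) * T (S (S (S n))) + T (S (S n))
    + S n * T (S n) = (4*n+19) * T (S (S (S (S n)))))%nat.

Lemma cv_shift w l k : Un_cv w l -> Un_cv (fun n => w (n + k)%nat) l.
Proof. intros H eps He. destruct (H eps He) as [N HN]. exists N. intros n Hn. apply HN. lia. Qed.

Lemma cv_unshift w l k : Un_cv (fun n => w (n + k)%nat) l -> Un_cv w l.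
Proof. intros H eps He. destruct (H eps He) as [N HN]. exists (N + k)%nat. intros n Hn.
  replace n with ((n - k) + k)%nat by lia. apply HN. lia. Qed.

Lemma cv_ext w1 w2 l : (forall n, w1 n = w2 n) -> Un_cv w1 l -> Un_cv w2 l.
Proof. intros E H eps He. destruct (H eps He) as [N HN]. exists N. intros n Hn. rewrite <- E. auto. Qed.

Lemma cv_bounds w l a b : Un_cv w l -> (forall n, a <= w n <= b) -> a <= l <= b.
Proof.
  intros H B. split.
  - destruct (Rle_or_lt a l) as [|Hl]; auto.
    destruct (H (a - l)) as [N HN]; [lra|]. specialize (HN N (le_n N)). specialize (B N).
    unfold R_dist in HN. apply Rabs_def2 in HN. lra.
  - destruct (Rle_or_lt l b) as [|Hl]; auto.
    destruct (H (l - b)) as [N HN]; [lra|]. specialize (HN N (le_n N)). specialize (B N).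
    unfold R_dist in HN. apply Rabs_def2 in HN. lra.
Qed.

Lemma cv_cst c : Un_cv (fun _ => c) c.
Proof. intros eps He. exists 0%nat. intros. unfold R_dist. rewrite Rminus_diag, Rabs_R0. lra. Qed.

Lemma contr_cv (e d : nat -> R) : (forall n, 0 <= e n) -> (forall n, e (S n) <= e n / 2 + d n) ->
  Un_cv d 0 -> Un_cv e 0.
Proof.
  intros He Hs Hd eps Heps.
  destruct (Hd (eps/4)) as [N HN]; [lra|].
  assert (Hk : forall k, e (N + k)%nat <= (1/2)^k * e N + eps/2).
  { induction k as [|k IH].
    - simpl. rewrite Nat.add_0_r. lra.
    - replace (N + S k)%nat with (S (N + k)) by lia.
      specialize (HN (N+k)%nat ltac:(lia)). unfold R_dist in HN. rewrite Rminus_0_r in HN.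
      apply Rabs_def2 in HN. pose proof (Hs (N+k)%nat). simpl. lra. }
  assert (HeN := He N).
  destruct (pow_lt_1_zero (1/2) ltac:(rewrite Rabs_right; lra) (eps / (2 * (e N + 1)))) as [K HK].
  { apply Rdiv_lt_0_compat; lra. }
  exists (N + K)%nat. intros n Hn. unfold R_dist. rewrite Rminus_0_r, Rabs_right by (apply Rle_ge, He).
  replace n with (N + (n - N))%nat by lia.
  specialize (HK (n - N)%nat ltac:(lia)). rewrite Rabs_right in HK by (apply Rle_ge, pow_le; lra).
  pose proof (Hk (n - N)%nat).
  assert ((1/2)^(n-N) * e N <= eps / (2 * (e N + 1)) * e N) by (apply Rmult_le_compat_r; lra).
  assert (eps / (2 * (e N + 1)) * e N < eps / 2).
  { unfold Rdiv. rewrite Rinv_mult. 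
    assert (0 < / (e N + 1)) by (apply Rinv_0_lt_compat; lra).
    assert (/ (e N + 1) * e N < 1).
    { apply Rmult_lt_reg_l with (e N + 1); [lra|]. rewrite <- Rmult_assoc, Rinv_r by lra. lra. }
    nra. }
  lra.
Qed.

Section Analysis.
Variable HPR : PR nb_terms.

Definition t n := INR (nb_terms n).
Definition u n := t n / t (S n).

Lemma tpos n : 0 < t (S n).
Proof. unfold t. rewrite nb_terms_rec. apply lt_0_INR. lia. Qed.

Lemma t0 : t 0 = 0. Proof. unfold t; rewrite nb0; reflexivity. Qed.

Lemma Rrec n : (INR n + 6) * t (n+5) + (2 * INR n + 9) * t (n+3) + t (n+2) + (INR n + 1) * t (n+1)
   = (4 * INR n + 19) * t (n+4).
Proof.
  pose proof (HPR n) as H. apply (f_equal INR) in H. unfold t.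
  replace (n+5)%nat with (S (S (S (S (S n))))) by lia.
  replace (n+4)%nat with (S (S (S (S n)))) by lia.
  replace (n+3)%nat with (S (S (S n))) by lia.
  replace (n+2)%nat with (S (S n)) by lia.
  replace (n+1)%nat with (S n) by lia.
  rewrite !plus_INR, !mult_INR, !plus_INR in H. rewrite !mult_INR in H.
  rewrite (S_INR n) in H. rewrite !S_INR in H. simpl in H. lra.
Qed.

Lemma step p : u (p+4) <= u (p+3) -> u (p+3) <= u (p+2) -> u (p+2) <= u (p+1) -> u (p+1) <= 1/2 ->
  u (p+5) <= u (p+4).
Proof.
  intros H1 H2 H3 H4.
  pose proof (Rrec (p+1)) as R1. pose proof (Rrec p) as R0.
  replace (p+1+5)%nat with (p+6)%nat in R1 by lia.
  replace (p+1+3)%nat with (p+4)%nat in R1 by lia.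
  replace (p+1+2)%nat with (p+3)%nat in R1 by lia.
  replace (p+1+1)%nat with (p+2)%nat in R1 by lia.
  replace (p+1+4)%nat with (p+5)%nat in R1 by lia.
  rewrite plus_INR in R1. simpl INR in R1.
  unfold u in *.
  replace (S (p+5)) with (p+6)%nat in * by lia.
  replace (S (p+4)) with (p+5)%nat in * by lia.
  replace (S (p+3)) with (p+4)%nat in * by lia.
  replace (S (p+2)) with (p+3)%nat in * by lia.
  replace (S (p+1)) with (p+2)%nat in * by lia.
  assert (P1 : 0 < t (p+1)) by (replace (p+1)%nat with (S p) by lia; apply tpos).
  assert (P2 : 0 < t (p+2)) by (replace (p+2)%nat with (S (p+1)) by lia; apply tpos).
  assert (P3 : 0 < t (p+3)) by (replace (p+3)%nat with (S (p+2)) by lia; apply tpos).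
  assert (P4 : 0 < t (p+4)) by (replace (p+4)%nat with (S (p+3)) by lia; apply tpos).
  assert (P5 : 0 < t (p+5)) by (replace (p+5)%nat with (S (p+4)) by lia; apply tpos).
  assert (P6 : 0 < t (p+6)) by (replace (p+6)%nat with (S (p+5)) by lia; apply tpos).
  set (t1 := t (p+1)) in *. set (t2 := t (p+2)) in *. set (t3 := t (p+3)) in *.
  set (t4 := t (p+4)) in *. set (t5 := t (p+5)) in *. set (t6 := t (p+6)) in *.
  set (P := INR p) in *.
  assert (HP : 0 <= P) by apply pos_INR.
  set (a := t4/t5) in *. set (b := t3/t4) in *. set (c := t2/t3) in *. set (d := t1/t2) in *.
  assert (Ha : 0 < a) by (unfold a; apply Rdiv_lt_0_compat; lra).
  assert (Hb : 0 < b) by (unfold b; apply Rdiv_lt_0_compat; lra).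
  assert (Hc : 0 < c) by (unfold c; apply Rdiv_lt_0_compat; lra).
  set (X6 := t6/t5). set (X5 := t5/t4).
  assert (E1 : (P+7)*X6 = (4*P+23) - (2*P+11)*a - a*b - (P+2)*(a*b*c)).
  { assert (R1' : (P+7)*t6 = (4*P+23)*t5 - (2*P+11)*t4 - t3 - (P+2)*t2) by lra.
    unfold X6,a,b,c. replace ((P+7)*(t6/t5)) with (((P+7)*t6)/t5) by (field; lra).
    rewrite R1'. field. repeat split; lra. }
  assert (E2 : (P+6)*X5 = (4*P+19) - (2*P+9)*b - b*c - (P+1)*(b*c*d)).
  { assert (R0' : (P+6)*t5 = (4*P+19)*t4 - (2*P+9)*t3 - t2 - (P+1)*t1) by lra.
    unfold X5,b,c,d. replace ((P+6)*(t5/t4)) with (((P+6)*t5)/t4) by (field; lra).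
    rewrite R0'. field. repeat split; lra. }
  assert (K1 : 0 <= (P+6)*((2*P+11)*(b-a) + b*(c-a) + (P+2)*(b*c)*(d-a))).
  { apply Rmult_le_pos; [lra|].
    assert (0 <= b*(c-a)) by (apply Rmult_le_pos; lra).
    assert (0 <= (P+2)*(b*c)*(d-a)).
    { apply Rmult_le_pos; [|lra]. apply Rmult_le_pos; [lra|]. apply Rmult_le_pos; lra. }
    assert (0 <= (2*P+11)*(b-a)) by (apply Rmult_le_pos; lra). lra. }
  assert (K2 : 0 < 5 - 3*b + b*c - 5*(b*c*d)).
  { assert (b*c <= 1/4) by nra. assert (b*c*d <= 1/8) by nra. assert (0 < b*c) by nra. lra. }
  assert (Id : (P+6)*((P+7)*X6) - (P+7)*((P+6)*X5) =
     (P+6)*((2*P+11)*(b-a) + b*(c-a) + (P+2)*(b*c)*(d-a)) + (5 - 3*b + b*c - 5*(b*c*d))).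
  { rewrite E1, E2. ring. }
  assert (Hx : X5 < X6).
  { assert (0 < (P+6)*(P+7)*(X6 - X5)) by (replace ((P+6)*(P+7)*(X6 - X5)) with ((P+6)*((P+7)*X6) - (P+7)*((P+6)*X5)) by ring; lra).
    assert (0 < (P+6)*(P+7)) by nra.
    destruct (Rle_or_lt X6 X5) as [Hle|]; [|lra].
    assert ((P+6)*(P+7)*(X6 - X5) <= 0); [|lra].
    nra. }
  unfold X5, X6 in Hx.
  assert (0 < t5/t4) by (apply Rdiv_lt_0_compat; lra).
  unfold a. replace (t5/t6) with (/ (t6/t5)) by (field; lra).
  replace (t4/t5) with (/ (t5/t4)) by (field; lra).
  apply Rlt_le, Rinv_lt_contravar; [|lra]. apply Rmult_lt_0_compat; lra.
Qed.

Lemma u_vals : u 1 = 1/2 /\ u 2 = 1/2 /\ u 3 = 4/9 /\ u 4 = 9/22.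
Proof.
  destruct nb_vals as (h1 & h2 & h3 & h4 & h5).
  unfold u, t. rewrite h1, h2, h3, h4, h5. simpl. repeat split; field.
Qed.

Lemma Qall p : u (p+4) <= u (p+3) /\ u (p+3) <= u (p+2) /\ u (p+2) <= u (p+1) /\ u (p+1) <= 1/2.
Proof.
  induction p as [|p IH].
  - destruct u_vals as (h1 & h2 & h3 & h4). simpl. rewrite h1, h2, h3, h4. repeat split; lra.
  - destruct IH as (H1 & H2 & H3 & H4).
    pose proof (step p H1 H2 H3 H4) as H5.
    replace (S p + 4)%nat with (p+5)%nat by lia. replace (S p + 3)%nat with (p+4)%nat by lia.
    replace (S p + 2)%nat with (p+3)%nat by lia. replace (S p + 1)%nat with (p+2)%nat by lia.
    repeat split; lra.
Qed.

Lemma u_dec n : u (S (S n)) <= u (S n).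
Proof. destruct (Qall n) as (_ & _ & H & _). replace (S (S n)) with (n+2)%nat by lia.
  replace (S n) with (n+1)%nat by lia. exact H. Qed.

Lemma u_nonneg n : 0 <= u n.
Proof.
  unfold u. destruct n as [|n]. rewrite t0. unfold Rdiv. rewrite Rmult_0_l. lra.
  apply Rlt_le, Rdiv_lt_0_compat; apply tpos.
Qed.

Lemma u_le n : u n <= 1/2.
Proof.
  destruct n as [|n]. unfold u. rewrite t0. unfold Rdiv. rewrite Rmult_0_l. lra.
  induction n as [|n IH]. destruct u_vals as (h1 & _). lra.
  pose proof (u_dec n). lra.
Qed.

Definition phi n := 1 + 2*u(n+3)*u(n+4) + u(n+1)*u(n+2)*u(n+3)*u(n+4) - 4*u(n+4).

Lemma tposk n k : (1 <= k)%nat -> 0 < t (n + k).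
Proof. intros Hk. replace (n+k)%nat with (S (n + k - 1)) by lia. apply tpos. Qed.

Lemma urat n k : u (n + k) = t (n+k) / t (n + S k).
Proof. unfold u. f_equal. f_equal. lia. Qed.

Lemma Hrel n : (INR n + 1) * phi n = -5 - 7*u(n+3)*u(n+4) - u(n+2)*u(n+3)*u(n+4) + 15*u(n+4).
Proof.
  pose proof (Rrec n) as R.
  pose proof (tposk n 1) as P1. pose proof (tposk n 2) as P2. pose proof (tposk n 3) as P3.
  pose proof (tposk n 4) as P4. pose proof (tposk n 5) as P5.
  unfold phi. rewrite !urat.
  set (t1 := t (n+1)) in *. set (t2 := t (n+2)) in *. set (t3 := t (n+3)) in *.
  set (t4 := t (n+4)) in *. set (t5 := t (n+5)) in *.
  assert (0 < t1) by (apply P1; lia). assert (0 < t2) by (apply P2; lia).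
  assert (0 < t3) by (apply P3; lia). assert (0 < t4) by (apply P4; lia). assert (0 < t5) by (apply P5; lia).
  change (n + 2)%nat with (n + S 1)%nat in *.
  change (t (n + S 1)) with t2. change (t (n + S 2)) with t3. change (t (n + S 3)) with t4.
  change (t (n + S 4)) with t5.
  assert (E3 : t3/t4 * (t4/t5) = t3 * /t5) by (field; lra).
  assert (E2 : t2/t3 * (t3/t4) * (t4/t5) = t2 * /t5) by (field; lra).
  assert (E1 : t1/t2 * (t2/t3) * (t3/t4) * (t4/t5) = t1 * /t5) by (field; lra).
  assert (E4 : t4/t5 = t4 * /t5) by (field; lra).
  replace (2 * (t3/t4) * (t4/t5)) with (2 * (t3/t4 * (t4/t5))) by ring.
  replace (7 * (t3/t4) * (t4/t5)) with (7 * (t3/t4 * (t4/t5))) by ring.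
  rewrite E1, E2, E3, E4.
  set (w := / t5).
  assert (Hw : t5 * w = 1) by (unfold w; field; lra).
  set (N := INR n) in *.
  assert (HNw : N * t5 * w = N) by (rewrite Rmult_assoc, Hw; ring).
  apply (f_equal (fun x => x * w)) in R.
  lra.
Qed.

Lemma u_cv rho : 0 < rho -> rho^3 + rho^2 + 3*rho - 1 = 0 -> Un_cv u rho.
Proof.
  intros Hr Hroot.
  destruct (decreasing_cv (fun n => u (S n))) as [L HL].
  - intro n. apply u_dec.
  - exists 0. intros x [i ->]. unfold opp_seq. pose proof (u_nonneg (S i)). lra.
  - assert (HB : 0 <= L <= 1/2).
    { apply (cv_bounds _ _ _ _ HL). intros; split; [apply u_nonneg|apply u_le]. }
    assert (Hu : Un_cv u L).
    { apply (cv_unshift _ _ 1). eapply cv_ext; [|exact HL]. intros n. simpl. f_equal. lia. }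
    assert (Hphi : Un_cv phi (1 + 2*L*L + L*L*L*L - 4*L)).
    { unfold phi. apply CV_minus.
      - apply CV_plus. apply CV_plus. apply cv_cst.
        apply CV_mult. apply CV_mult. apply cv_cst. apply cv_shift; auto. apply cv_shift; auto.
        apply CV_mult. apply CV_mult. apply CV_mult.
        apply cv_shift; auto. apply cv_shift; auto. apply cv_shift; auto. apply cv_shift; auto.
      - apply CV_mult. apply cv_cst. apply cv_shift; auto. }
    assert (Hpsi : 1 + 2*L*L + L*L*L*L - 4*L = 0).
    { set (psi := 1 + 2*L*L + L*L*L*L - 4*L) in *.
      destruct (Req_dec psi 0) as [|Hne]; auto. exfalso.
      assert (He : 0 < Rabs psi / 2) by (apply Rabs_pos_lt in Hne; lra).
      destruct (Hphi _ He) as [N0 HN0].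
      destruct (INR_archimed (Rabs psi / 2) 15 He) as [M HM].
      set (n := Nat.max N0 M).
      specialize (HN0 n ltac:(unfold n; lia)). unfold R_dist in HN0.
      pose proof (Hrel n) as Hr'.
      pose proof (le_INR M n ltac:(unfold n; lia)).
      pose proof (pos_INR n).
      pose proof (u_nonneg (n+2)); pose proof (u_nonneg (n+3)); pose proof (u_nonneg (n+4)).
      pose proof (u_le (n+2)); pose proof (u_le (n+3)); pose proof (u_le (n+4)).
      set (a := u (n+2)) in *. set (b := u (n+3)) in *. set (c := u (n+4)) in *.
      assert (Hbd : Rabs (-5 - 7*b*c - a*b*c + 15*c) <= 15).
      { assert (0 <= b*c <= 1/4) by (split; nra). assert (0 <= a*(b*c) <= 1/8) by (split; nra).
        apply Rabs_le. replace (a*b*c) with (a*(b*c)) by ring. replace (7*b*c) with (7*(b*c)) by ring. lra. }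
      assert (Hp : Rabs psi / 2 < Rabs (phi n)).
      { pose proof (Rabs_triang_inv psi (phi n)) as T. rewrite <- Rabs_Ropp in HN0.
        replace (- (phi n - psi)) with (psi - phi n) in HN0 by ring. lra. }
      rewrite <- Hr' in Hbd. rewrite Rabs_mult, (Rabs_right (INR n + 1)) in Hbd by lra.
      assert (INR M * (Rabs psi / 2) <= INR n * (Rabs psi / 2)) by (apply Rmult_le_compat_r; lra).
      assert (INR n * (Rabs psi / 2) <= (INR n + 1) * Rabs (phi n)).
      { apply Rle_trans with (INR n * Rabs (phi n)). apply Rmult_le_compat_l; lra.
        pose proof (Rabs_pos (phi n)). nra. }
      lra. }
    assert (HL3 : L^3 + L^2 + 3*L - 1 = 0).
    { assert (E : 1 + 2*L*L + L*L*L*L - 4*L = (1 - L) * (-(L^3 + L^2 + 3*L - 1))) by ring.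
      rewrite E in Hpsi. apply Rmult_integral in Hpsi as [|H]; [lra|lra]. }
    assert (L = rho).
    { assert (E : L^3 + L^2 + 3*L - 1 - (rho^3 + rho^2 + 3*rho - 1) = (L - rho)*(L*L + L*rho + rho*rho + L + rho + 3)) by ring.
      rewrite HL3, Hroot, Rminus_diag in E. symmetry in E. apply Rmult_integral in E as [|H]; [lra|nra]. }
    subst L. exact Hu.
Qed.

Lemma nbh_shift m h : nb_terms_heads (m + h) h = nb_terms_heads m 0.
Proof. induction h as [|h IH]. now rewrite Nat.add_0_r.
  replace (m + S h)%nat with (S (m + h)) by lia. rewrite nbh_S. exact IH. Qed.

Lemma Nh0 k : INR (nb_terms_heads (S k) 0) = t (S k) - t k.
Proof. unfold t. rewrite <- (nbh_0 k), plus_INR. ring. Qed.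

Lemma ratio_cv rho h : Un_cv u rho -> Un_cv (fun k => t (S k) / t (S k + h)) (rho ^ h).
Proof.
  intros Hu. induction h as [|h IH].
  - simpl. eapply cv_ext; [|apply cv_cst]. intros k. rewrite Nat.add_0_r. field.
    pose proof (tpos k); lra.
  - replace (rho ^ S h) with (rho ^ h * rho) by (simpl; ring).
    eapply cv_ext; [|apply (CV_mult _ _ _ _ IH (cv_shift u rho (S h) Hu))].
    intros k. simpl. unfold u. replace (k + S h)%nat with (S k + h)%nat by lia.
      replace (S k + S h)%nat with (S (S k + h)) by lia.
      pose proof (tpos k). pose proof (tpos (k + h)). pose proof (tpos (S (k+h))).
      replace (S k + h)%nat with (S (k+h)) by lia. field. lra.
Qed.

Lemma prob_cv rho h : Un_cv u rho -> Un_cv (fun n => prob_heads n h) ((1 - rho) * rho ^ h).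
Proof.
  intros Hu. apply (cv_unshift _ _ (S h)).
  eapply cv_ext; [|apply (CV_mult _ _ _ _ (CV_minus _ _ _ _ (cv_cst 1) Hu) (ratio_cv rho h Hu))].
  intros k. simpl. unfold prob_heads. replace (k + S h)%nat with (S k + h)%nat by lia.
  rewrite nbh_shift, Nh0. fold (t (S k + h)). unfold u.
  pose proof (tpos k). pose proof (tpos (k + h)). replace (S k + h)%nat with (S (k+h)) by lia.
  field. lra.
Qed.

Definition S1 n := sum_f_R0 (fun i => INR i * INR (nb_terms_heads n i)) n.
Definition S0 n := sum_f_R0 (fun i => INR (nb_terms_heads n i)) n.

Lemma S0_eq n : S0 n = t n.
Proof.
  induction n as [|n IH].
  - unfold S0, t. reflexivity.
  - unfold S0. rewrite decomp_sum by lia. simpl pred.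
    rewrite Nh0. erewrite sum_eq; [|intros i _; rewrite nbh_S; reflexivity].
    fold (S0 n). rewrite IH. ring.
Qed.

Lemma S1_S n : S1 (S n) = S1 n + t n.
Proof.
  unfold S1. rewrite decomp_sum by lia. simpl pred.
  erewrite sum_eq; [|intros i _; rewrite nbh_S, S_INR; reflexivity].
  erewrite sum_eq; [|intros i _; rewrite Rmult_plus_distr_r, Rmult_1_l; reflexivity].
  rewrite plus_sum. fold (S0 n). rewrite S0_eq. simpl. ring.
Qed.

Lemma exp_eq n : exp_heads n * t n = S1 n.
Proof.
  destruct n as [|n].
  - rewrite t0. unfold S1. simpl. ring.
  - unfold exp_heads, prob_heads. fold (t (S n)). pose proof (tpos n).
    transitivity (/ t (S n) * S1 (S n) * t (S n)); [|field; lra].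
    f_equal. unfold S1. rewrite scal_sum. apply sum_eq. intros i _. unfold Rdiv. ring.
Qed.

Lemma exp_rec n : exp_heads (S n) = u n * (1 + exp_heads n).
Proof.
  pose proof (exp_eq (S n)) as E. rewrite S1_S, <- exp_eq in E. pose proof (tpos n).
  unfold u. apply Rmult_eq_reg_r with (t (S n)); [|lra]. rewrite E. field. lra.
Qed.

Lemma main_aux rho : 0 < rho -> rho^3 + rho^2 + 3*rho - 1 = 0 ->
  (forall h : nat, Un_cv (fun n => prob_heads n h) ((1 - rho) * rho ^ h)) /\
  Un_cv exp_heads (rho / (1 - rho)).
Proof.
  intros Hr Hroot. pose proof (u_cv rho Hr Hroot) as Hu. split.
  - intros h. now apply prob_cv.
  - assert (Hr1 : rho < 1/3) by nra.
    set (Es := rho / (1 - rho)).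
    assert (HEs : Es = rho * (1 + Es)) by (unfold Es; field; lra).
    assert (HEs0 : 0 <= Es) by (unfold Es; apply Rlt_le, Rdiv_lt_0_compat; lra).
    assert (He : Un_cv (fun n => Rabs (exp_heads n - Es)) 0).
    { apply (contr_cv _ (fun n => Rabs (u n - rho) * (1 + Es))).
      - intros; apply Rabs_pos.
      - intros n. rewrite exp_rec.
        replace (u n * (1 + exp_heads n) - Es) with (u n * (exp_heads n - Es) + (u n - rho) * (1 + Es))
          by lra.
        eapply Rle_trans; [apply Rabs_triang|]. rewrite !Rabs_mult, (Rabs_right (u n)), (Rabs_right (1 + Es))
          by (try apply Rle_ge, u_nonneg; lra).
        pose proof (u_le n). pose proof (Rabs_pos (exp_heads n - Es)). nra.
      - replace 0 with (0 * (1 + Es)) by ring. apply CV_mult; [|apply cv_cst].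
        intros eps Heps. destruct (Hu eps Heps) as [N HN]. exists N. intros n Hn.
        specialize (HN n Hn). unfold R_dist in *. rewrite Rminus_0_r, Rabs_Rabsolu. exact HN. }
    intros eps Heps. destruct (He eps Heps) as [N HN]. exists N. intros n Hn.
    specialize (HN n Hn). unfold R_dist in *. rewrite Rminus_0_r, Rabs_Rabsolu in HN. exact HN.
Qed.

End Analysis.
Close Scope R_scope.
From mathcomp Require Import all_boot all_algebra.
From mathcomp Require Import ring zify.
Import GRing.Theory.

Section PolyRec.
Local Open Scope ring_scope.

Definition tz (N : nat) (p : {poly int}) := forall i, (i < N)%N -> p`_i = 0.

Lemma tzD N p q : tz N p -> tz N q -> tz N (p + q).
Proof. by move=> hp hq i hi; rewrite coefD hp // hq // addr0. Qed.
Lemma tzN N p : tz N p -> tz N (- p).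
Proof. by move=> hp i hi; rewrite coefN hp // oppr0. Qed.
Lemma tzMl N p q : tz N p -> tz N (q * p).
Proof.
move=> hp i hi; rewrite coefM big1 // => j _.
rewrite hp ?mulr0 //; apply: leq_ltn_trans hi; exact: leq_subr.
Qed.
Lemma tzMr N p q : tz N p -> tz N (p * q).
Proof. by move=> hp; rewrite mulrC; apply: tzMl. Qed.
Lemma tzW N M p : (M <= N)%N -> tz N p -> tz M p.
Proof. by move=> hMN hp i hi; apply: hp; apply: leq_trans hMN. Qed.
Lemma tz_deriv N p : tz N.+1 p -> tz N p^`().
Proof. by move=> hp i hi; rewrite coef_deriv hp // mul0rn. Qed.

End PolyRec.

Section PolyRec2.
Local Open Scope ring_scope.

Lemma prec (t : nat -> nat) (t0 : t 0%N = 0%N)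
  (ht : forall n, t n.+1 = (1 + t n + \sum_(i < n.+1) t i * t (n - i))%N) (n : nat) :
  (n.+4.+2 * t n.+4.+1 + (2*n+9) * t n.+3 + t n.+2 + n.+1 * t n.+1 = (4*n+19) * t n.+4)%N.
Proof.
pose M := n.+4.+2.
pose N := M.+1.
pose P : {poly int} := \poly_(i < N) (t i)%:Z.
have cP : forall j, (j < N)%N -> P`_j = (t j)%:Z by move=> j hj; rewrite coef_poly hj.
pose U : {poly int} := \poly_(i < N) ((i != 0%N)%:R).
have cU : forall j, (j < N)%N -> U`_j = (j != 0%N)%:R by move=> j hj; rewrite coef_poly hj.
pose E := 'X * P ^+ 2 + ('X - 1) * P + U.
have hE : tz N E.
  move=> i hi; rewrite /E mulrBl mul1r !coefD coefN !coefXM cU //.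
  case: i hi => [|k] hk /=.
    by rewrite cP // t0; lia.
  rewrite cP; last by apply: ltnW.
  rewrite expr2 coefM cP // ht.
  have -> : \sum_(j < k.+1) P`_j * P`_(k - j) = ((\sum_(j < k.+1) t j * t (k - j))%N)%:Z.
    rewrite (big_morph Posz PoszD (erefl _)); apply: eq_bigr => j _.
    by rewrite PoszM !cP //; have := ltn_ord j; lia.
  rewrite !PoszD; lia.
pose V := 'X - (1 - 'X) * U.
have hV : tz N V.
  move=> i hi; rewrite /V mulrBl mul1r !(coefB, coefX, coefXM) cU //.
  case: i hi => [|[|k]] hk //=.
  - by rewrite cU //= subr0 subrr.
  - rewrite cU /=; last lia. lia.
pose Dl : {poly int} := 1 - 'X *+ 3 - 'X^2 - 'X^3.
pose Dt : {poly int} := ('X * P) *+ 2 + 'X - 1.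
pose G := (1 - 'X) * Dt ^+ 2 - Dl.
have eG : G = 'X *+ 4 * ((1 - 'X) * E + V) by rewrite /G /E /V /Dt /Dl; ring.
have hG : tz N G.
  by rewrite eG; apply: tzMl; apply: tzD => //; apply: tzMl.
have eG' : G^`() = - Dt^+2 + (1 - 'X) * (Dt * Dt^`() *+ 2) - Dl^`().
  rewrite /G derivB derivM derivB derivX -polyC1 derivC polyC1 expr2 derivM; ring.
have hG' : tz M G^`() by apply: tz_deriv.
pose H := (1-'X) * Dl * Dt^`() *+ 2 - (Dl + (1-'X) * Dl^`()) * Dt.
have eH : H = (1-'X) * Dt * G^`() + G * Dt - (1-'X) * G * Dt^`() *+ 2.
  by rewrite eG' /H /G; ring.
have hH : tz M H.
  rewrite eH; apply: tzD; [apply: tzD|apply: tzN].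
  - by apply: tzMl.
  - by apply: (@tzW N M _ (leqnSn M)); apply: tzMr.
  - by rewrite -mulr_natr; apply: tzMr; apply: (@tzW N M _ (leqnSn M)); apply: tzMr; apply: tzMl.
pose dP := P^`().
have eDl : Dl^`() = - 'X^2 *+ 3 - 'X *+ 2 - 3%:R.
  rewrite /Dl !derivB !derivXn derivMn derivX -polyC1 derivC polyC1 /=; ring.
have eDt : Dt^`() = (P + 'X * dP) *+ 2 + 1.
  rewrite /Dt derivB derivD derivMn derivM derivX -polyC1 derivC polyC1 /dP; ring.
pose K := P *+ 2 - ('X * P) *+ 6 + ('X^2 * P) *+ 6 + ('X^3 * P) *+ 2 + ('X * dP) *+ 2
   - ('X^2 * dP) *+ 8 + ('X^3 * dP) *+ 4 + ('X^5 * dP) *+ 2 - 'X *+ 4 + 'X^2 *+ 2 + 'X^3 *+ 2.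
have eHK : H = K *+ 2 by rewrite /H eDl eDt /K /Dl /Dt; ring.
have hK : tz M K.
  move=> i hi; have := hH i hi; rewrite eHK coefMn => /eqP.
  by rewrite Num.Theory.mulrn_eq0 /= => /eqP.
have := hK n.+4.+1 (ltnSn _).
rewrite /K !(coefD, coefN, coefMn, coefXM, coefXnM, coefX, coefXn) /= /dP !coef_deriv.
have e2 : (n.+1.+4 - 2 = n.+3)%N by lia.
have e3 : (n.+1.+4 - 3 = n.+2)%N by lia.
have e5 : (n.+1.+4 - 5 = n)%N by lia.
rewrite e2 e3 e5 !cP; try lia.
Qed.
End PolyRec2.

Lemma lsum_big (f : nat -> nat) k a : list_sum (List.map f (List.seq a k)) = (\sum_(i < k) f (a + i))%N.
Proof.
elim: k a => [|k IH] a; first by rewrite big_ord0.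
rewrite big_ord_recl /= IH addn0.
congr (_ + _)%N; apply: eq_bigr => i _; congr f; rewrite /bump /=; lia.
Qed.

Lemma PR_nb : PR nb_terms.
Proof.
move=> n; apply: (prec nb_terms nb0) => m.
rewrite nb_terms_rec (lsum_big (fun i => Nat.mul (nb_terms i) (nb_terms (Nat.sub m i)))). reflexivity.
Qed.

Open Scope R_scope.

Theorem mainTheorem4 (rho : R) (Hrho_pos : 0 < rho)
  (Hrho_root : rho ^ 3 + rho ^ 2 + 3 * rho - 1 = 0) :
  (forall h : nat, Un_cv (fun n => prob_heads n h) ((1 - rho) * rho ^ h)) /\
  Un_cv exp_heads (rho / (1 - rho)).
Proof.
  exact (main_aux PR_nb rho Hrho_pos Hrho_root).
Qed.
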